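(* Let $\widetilde\gamma$ be a Kähler metric on $\widetilde M_2$ (with respect to the complex structure inherited from $\mathbb{H}^2\times\mathbb{H}^2$) which is invariant under the group $G=PL(2,\mathbb{R})\times\{\mathrm{Id},P\}$. Then there exists a smooth function $A:(0,\infty)\to\mathbb{R}$ such that $$\widetilde\gamma=A_1(s)\,ds^2+A_2(s)\,\sigma_1^2+A_3(s)\,\sigma_2^2+A_4(s)\,\sigma_3^2,$$ where $$A_1=\frac{1}{8\sinh(s/2)}\frac{d}{ds}\Big(\frac{A(s)}{\cosh(s/2)}\Big),\quad A_2=A(s),\quad A_3=2\sinh(s/2)\frac{d}{ds}\Big(\frac{A(s)}{\cosh(s/2)}\Big),\quad A_4=\frac{A(s)}{\cosh^2(s/2)}.$$
   Context: $\mathbb{H}^2=\{x+iy\in\mathbb{C}:y>0\}$ is the upper half plane. $\widetilde M_2=\mathbb{H}^2\times\mathbb{H}^2\setminus\{(z,z):z\in\mathbb{H}^2\}$, a complex manifold with coordinates $(z_1,z_2)$. $PL(2,\mathbb{R})$ denotes the group of real $2\times2$ matrices of positive determinant modulo nonzero scalars (equivalently $SL(2,\mathbb{R})/\{\pm I\}$), acting on $\mathbb{H}^2$ by $M\odot z=(az+b)/(cz+d)$ for $M=\begin{pmatrix}a&b\\c&d\end{pmatrix}$, and on $\widetilde M_2$ diagonally: $(z_1,z_2)\mapsto(M\odot z_1,M\odot z_2)$. $P:(z_1,z_2)\mapsto(z_2,z_1)$. For $s>0$ put $w_s=(ie^{s/2},ie^{-s/2})$; the map $(0,\infty)\times PL(2,\mathbb{R})\to\widetilde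 M_2$, $(s,g)\mapsto g\cdot w_s$, is a diffeomorphism, and we use $(s,g)$ as coordinates. Let $e_1=\begin{pmatrix}0&1\\1&0\end{pmatrix}$, $e_2=\begin{pmatrix}0&1\\-1&0\end{pmatrix}$, $e_3=\begin{pmatrix}1&0\\0&-1\end{pmatrix}$ be a basis of the Lie algebra of $PL(2,\mathbb{R})$, and let $\sigma_1,\sigma_2,\sigma_3$ be the left-invariant 1-forms on $PL(2,\mathbb{R})$ dual to the corresponding left-invariant vector fields, pulled back to $\widetilde M_2$ via the coordinates $(s,g)$. Juxtaposition of 1-forms means symmetric tensor product. *)

(* Defs.v *)
(* classical reals. Everything is written in the real
   coordinates (x1,y1,x2,y2) of H^2 x H^2 subset R^4, z_k = x_k + i y_k. *)
From Stdlib Require Import Reals Lra.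
Open Scope R_scope.

Definition pt : Type := (R * R * R * R)%type.   (* (x1, y1, x2, y2) *)

Definition coord (p : pt) (i : nat) : R :=
  let '(a, b, c, d) := p in
  match i with 0%nat => a | 1%nat => b | 2%nat => c | _ => d end.

Definition upd (p : pt) (i : nat) (t : R) : pt :=
  let '(a, b, c, d) := p in
  match i with
  | 0%nat => (t, b, c, d) | 1%nat => (a, t, c, d)
  | 2%nat => (a, b, t, d) | _ => (a, b, c, t) end.

(* tangent vectors: components in the basis d/dx1, d/dy1, d/dx2, d/dy2
   (indices 0..3) *)
Definition vec : Type := nat -> R.
Definition mkvec (a b c d : R) : vec := fun i =>
  match i with 0%nat => a | 1%nat => b | 2%nat => c | 3%nat => d | _ => 0 end.
Definition basis (i : nat) : vec := fun j => if Nat.eqb i j then 1 else 0.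

Definition M2 (p : pt) : Prop :=
  0 < coord p 1 /\ 0 < coord p 3 /\
  (coord p 0 <> coord p 2 \/ coord p 1 <> coord p 3).

Definition dist4 (p q : pt) : R :=
  Rmax (Rmax (Rabs (coord p 0 - coord q 0)) (Rabs (coord p 1 - coord q 1)))
       (Rmax (Rabs (coord p 2 - coord q 2)) (Rabs (coord p 3 - coord q 3))).

Definition cont_on (U : pt -> Prop) (f : pt -> R) : Prop :=
  forall p, U p -> forall eps, 0 < eps -> exists delta, 0 < delta /\
    forall q, U q -> dist4 p q < delta -> Rabs (f q - f p) < eps.

Definition has_partial (U : pt -> Prop) (f : pt -> R) (i : nat) (df : pt -> R) :=
  forall p, U p -> derivable_pt_lim (fun t => f (upd p i t)) (coord p i) (df p).

Fixpoint Ck_on (U : pt -> Prop) (k : nat) (f : pt -> R) : Prop :=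
  match k with
  | 0%nat => cont_on U f
  | S k' => cont_on U f /\
      forall i, (i < 4)%nat -> exists df, has_partial U f i df /\ Ck_on U k' df
  end.

Definition smooth_on (U : pt -> Prop) (f : pt -> R) : Prop :=
  forall k, Ck_on U k f.

Fixpoint Ck_pos (k : nat) (f : R -> R) : Prop :=
  match k with
  | 0%nat => forall s, 0 < s -> continuity_pt f s
  | S k' => (forall s, 0 < s -> continuity_pt f s) /\
      exists df, (forall s, 0 < s -> derivable_pt_lim f s (df s)) /\ Ck_pos k' df
  end.

Definition smooth_pos (f : R -> R) : Prop := forall k, Ck_pos k f.

(* a metric field: gm p i j is the (i,j) component at p, i,j in 0..3 *)
Definition metric_field : Type := pt -> nat -> nat -> R.

Definition sum4 (f : nat -> R) : R := f 0%nat + f 1%nat + f 2%nat + f 3%nat.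

Definition met (gm : metric_field) (p : pt) (v w : vec) : R :=
  sum4 (fun i => sum4 (fun j => gm p i j * v i * w j)).

Definition Jv (v : vec) : vec := mkvec (- v 1%nat) (v 0%nat) (- v 3%nat) (v 2%nat).

Definition kform (gm : metric_field) (p : pt) (i j : nat) : R :=
  met gm p (Jv (basis i)) (basis j).

Definition is_kahler_metric (gm : metric_field) : Prop :=
  (forall i j, (i < 4)%nat -> (j < 4)%nat -> smooth_on M2 (fun p => gm p i j)) /\
  (forall p i j, M2 p -> (i < 4)%nat -> (j < 4)%nat -> gm p i j = gm p j i) /\
  (forall p (v : vec), M2 p ->
     (v 0%nat <> 0 \/ v 1%nat <> 0 \/ v 2%nat <> 0 \/ v 3%nat <> 0) ->
     0 < met gm p v v) /\
  (forall p v w, M2 p -> met gm p (Jv v) (Jv w) = met gm p v w) /\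
  (* the Kaehler form is closed: d omega = 0 *)
  (forall p i j k a b c, M2 p -> (i < 4)%nat -> (j < 4)%nat -> (k < 4)%nat ->
     derivable_pt_lim (fun t => kform gm (upd p i t) j k) (coord p i) a ->
     derivable_pt_lim (fun t => kform gm (upd p j t) k i) (coord p j) b ->
     derivable_pt_lim (fun t => kform gm (upd p k t) i j) (coord p k) c ->
     a + b + c = 0).

Definition Cmul (z w : R * R) : R * R :=
  (fst z * fst w - snd z * snd w, fst z * snd w + snd z * fst w).
Definition Cinv (z : R * R) : R * R :=
  let n := fst z * fst z + snd z * snd z in (fst z / n, - snd z / n).
Definition Cadd (z w : R * R) : R * R := (fst z + fst w, snd z + snd w).
Definition Cscal (r : R) (z : R * R) : R * R := (r * fst z, r * snd z).

(* a matrix (a b; c d) with ad - bc > 0 represents an element of PL(2,R) *)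
Definition mob (a b c d : R) (z : R * R) : R * R :=
  Cmul (Cadd (Cscal a z) (b, 0)) (Cinv (Cadd (Cscal c z) (d, 0))).

(* complex derivative of z |-> (az+b)/(cz+d):  (ad-bc)/(cz+d)^2 *)
Definition mob_der (a b c d : R) (z : R * R) : R * R :=
  Cscal (a * d - b * c)
    (Cinv (Cmul (Cadd (Cscal c z) (d, 0)) (Cadd (Cscal c z) (d, 0)))).

Definition z1 (p : pt) : R * R := (coord p 0, coord p 1).
Definition z2 (p : pt) : R * R := (coord p 2, coord p 3).
Definition of_zz (u v : R * R) : pt := (fst u, snd u, fst v, snd v).
Definition vec_of_zz (u v : R * R) : vec := mkvec (fst u) (snd u) (fst v) (snd v).

Definition act (a b c d : R) (p : pt) : pt :=
  of_zz (mob a b c d (z1 p)) (mob a b c d (z2 p)).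
Definition dact (a b c d : R) (p : pt) (v : vec) : vec :=
  vec_of_zz (Cmul (mob_der a b c d (z1 p)) (v 0%nat, v 1%nat))
            (Cmul (mob_der a b c d (z2 p)) (v 2%nat, v 3%nat)).

Definition swap (p : pt) : pt := of_zz (z2 p) (z1 p).
Definition dswap (v : vec) : vec := mkvec (v 2%nat) (v 3%nat) (v 0%nat) (v 1%nat).

Definition G_invariant (gm : metric_field) : Prop :=
  (forall a b c d p v w, 0 < a * d - b * c -> M2 p ->
     met gm (act a b c d p) (dact a b c d p v) (dact a b c d p w) = met gm p v w) /\
  (forall p v w, M2 p -> met gm (swap p) (dswap v) (dswap w) = met gm p v w).

Definition ws (s : R) : pt := (0, exp (s / 2), 0, exp (- s / 2)).
Definition dws (s : R) : vec := mkvec 0 (exp (s / 2) / 2) 0 (- exp (- s / 2) / 2).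

(* infinitesimal Moebius action of X = (a b; c d) in sl(2,R):
   z |-> b + (a - d) z - c z^2 *)
Definition inf_act (a b c d : R) (z : R * R) : R * R :=
  Cadd (b, 0) (Cadd (Cscal (a - d) z) (Cscal (- c) (Cmul z z))).
Definition inf_vec (a b c d : R) (p : pt) : vec :=
  vec_of_zz (inf_act a b c d (z1 p)) (inf_act a b c d (z2 p)).

Definition Xe (i : nat) (p : pt) : vec :=
  match i with
  | 1%nat => inf_vec 0 1 1 0 p
  | 2%nat => inf_vec 0 1 (-1) 0 p
  | _ => inf_vec 1 0 0 (-1) p
  end.

(* Frame at g . w_s (g = class of (a b; c d)):
   index 0 : d/ds ;  index i = 1,2,3 : left-invariant field of e_i,
   i.e. d/dt|_{t=0} (g exp(t e_i)) . w_s = dg (X_{e_i}(w_s)).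
   This frame is dual to the coframe (ds, sigma_1, sigma_2, sigma_3). *)
Definition frame (a b c d s : R) (i : nat) : vec :=
  match i with
  | 0%nat => dact a b c d (ws s) (dws s)
  | _ => dact a b c d (ws s) (Xe i (ws s))
  end.

(* Main.v *)
Require Import Defs.
From Stdlib Require Import Reals Lra Lia FunctionalExtensionality.
Open Scope R_scope.

Lemma dext (f g : R -> R) x l l' :
  (forall t, f t = g t) -> l = l' -> derivable_pt_lim f x l -> derivable_pt_lim g x l'.
Proof.
  intros H1 H2 H. replace g with f by (apply functional_extensionality; auto).
  subst; exact H.
Qed.

Lemma dloc (f g : R -> R) x l :
  (exists d, 0 < d /\ forall t, Rabs (t - x) < d -> f t = g t) ->
  derivable_pt_lim f x l -> derivable_pt_lim g x l.
Proof.
  intros [d [Hd Hfg]] H eps He.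
  destruct (H eps He) as [del Hdel].
  assert (Hm : 0 < Rmin del d) by (apply Rmin_pos; [apply cond_pos|lra]).
  exists (mkposreal _ Hm). intros h Hh Hh2. simpl in Hh2.
  rewrite <- !Hfg.
  - apply Hdel; auto. apply Rlt_le_trans with (1:=Hh2), Rmin_l.
  - replace (x - x) with 0 by ring. rewrite Rabs_R0; lra.
  - replace (x + h - x) with h by ring. apply Rlt_le_trans with (1:=Hh2), Rmin_r.
Qed.

Lemma Ck_mono k f : Ck_pos (S k) f -> Ck_pos k f.
Proof.
  revert f; induction k; intros f H.
  - exact (proj1 H).
  - destruct H as [Hc [df [Hd Hk]]]. split; auto. exists df; split; auto.
Qed.

Lemma Ck_cont k f : Ck_pos k f -> forall s, 0 < s -> continuity_pt f s.
Proof. destruct k; simpl; intros H; [exact H | exact (proj1 H)]. Qed.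

Lemma Ck_plus k : forall f g, Ck_pos k f -> Ck_pos k g -> Ck_pos k (fun t => f t + g t).
Proof.
  induction k; intros f g Hf Hg.
  - intros s Hs. apply (continuity_pt_plus f g); auto.
  - split. intros s Hs. apply (continuity_pt_plus f g); eapply Ck_cont; eauto.
    destruct Hf as [_ [df [Hdf Hkf]]]. destruct Hg as [_ [dg [Hdg Hkg]]].
    exists (fun t => df t + dg t). split.
    + intros s Hs. eapply dext; [| reflexivity | apply derivable_pt_lim_plus; [apply Hdf|apply Hdg]; auto].
      intro; reflexivity.
    + auto.
Qed.

Lemma Ck_mult k : forall f g, Ck_pos k f -> Ck_pos k g -> Ck_pos k (fun t => f t * g t).
Proof.
  induction k; intros f g Hf Hg.
  - intros s Hs. apply (continuity_pt_mult f g); auto.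
  - split. intros s Hs. apply (continuity_pt_mult f g); eapply Ck_cont; eauto.
    pose proof (Ck_mono _ _ Hf) as Hf'. pose proof (Ck_mono _ _ Hg) as Hg'.
    destruct Hf as [_ [df [Hdf Hkf]]]. destruct Hg as [_ [dg [Hdg Hkg]]].
    exists (fun t => df t * g t + f t * dg t). split.
    + intros s Hs. eapply dext; [| reflexivity | apply derivable_pt_lim_mult; [apply Hdf|apply Hdg]; auto].
      intro; reflexivity.
    + apply Ck_plus; apply IHk; auto.
Qed.

Lemma Ck_const k c : Ck_pos k (fun _ => c).
Proof.
  revert c; induction k; intros c.
  - intros s _. apply continuity_pt_const. intros a b; reflexivity.
  - split. intros s _. apply continuity_pt_const. intros a b; reflexivity.
    exists (fun _ => 0). split; auto. intros s _. apply derivable_pt_lim_const.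
Qed.

Lemma dexpl a s : derivable_pt_lim (fun t => exp (a * t)) s (a * exp (a * s)).
Proof.
  eapply dext; [| | apply (derivable_pt_lim_comp (fun t => a * t) exp s a (exp (a * s)))].
  - intro; reflexivity.
  - ring.
  - eapply dext; [| | apply (derivable_pt_lim_scal id a s 1), derivable_pt_lim_id]; intros; unfold mult_real_fct, id; ring.
  - apply derivable_pt_lim_exp.
Qed.

Lemma Ck_expl k : forall a, Ck_pos k (fun t => exp (a * t)).
Proof.
  induction k; intros a.
  - intros s _. apply derivable_continuous_pt. exists (a * exp (a * s)). apply dexpl.
  - split. intros s _. apply derivable_continuous_pt. exists (a * exp (a * s)). apply dexpl.
    exists (fun t => a * exp (a * t)). split. intros; apply dexpl.
    apply Ck_mult; [apply Ck_const | apply IHk].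
Qed.

Lemma Ck_ext k f g : (forall t, f t = g t) -> Ck_pos k f -> Ck_pos k g.
Proof. intros H. replace g with f by (apply functional_extensionality; auto). auto. Qed.

Lemma Ck_exp k : Ck_pos k exp.
Proof. eapply Ck_ext; [|apply (Ck_expl k 1)]. intro; simpl; f_equal; ring. Qed.

Definition pr (r : R) : pt := (0, r, 0, 1).

Lemma exp_gt1 s : 0 < s -> 1 < exp s.
Proof. intros. rewrite <- exp_0. apply exp_increasing; auto. Qed.

Lemma M2_pr r : 1 < r -> M2 (pr r).
Proof. intros. unfold M2, pr; simpl. repeat split; try lra. Qed.

Lemma partial1 f df r : has_partial M2 f 1 df -> 1 < r ->
  derivable_pt_lim (fun t => f (pr t)) r (df (pr r)).
Proof. intros H Hr. apply (H (pr r) (M2_pr r Hr)). Qed.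

Lemma dcompf f df s : has_partial M2 f 1 df -> 0 < s ->
  derivable_pt_lim (fun t => f (pr (exp t))) s (df (pr (exp s)) * exp s).
Proof.
  intros H Hs.
  eapply dext; [| reflexivity | apply (derivable_pt_lim_comp exp (fun t => f (pr t)))].
  intro; reflexivity. apply derivable_pt_lim_exp. apply partial1; auto; apply exp_gt1; auto.
Qed.

Lemma Ck_comp k : forall f, Ck_on M2 (S k) f -> Ck_pos k (fun s => f (pr (exp s))).
Proof.
  induction k; intros f Hf; destruct Hf as [_ Hp]; destruct (Hp 1%nat ltac:(lia)) as [df [Hdf Hk]].
  - intros s Hs. apply derivable_continuous_pt. eexists. apply dcompf; eauto.
  - split. intros s Hs. apply derivable_continuous_pt. eexists. apply dcompf; eauto.
    exists (fun s => df (pr (exp s)) * exp s). split. intros; apply dcompf; auto.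
    apply Ck_mult; [apply IHk; auto | apply Ck_exp].
Qed.

Lemma met_ext gm p v w v' w' :
  (forall i, (i < 4)%nat -> v i = v' i) -> (forall i, (i < 4)%nat -> w i = w' i) ->
  met gm p v w = met gm p v' w'.
Proof.
  intros Hv Hw. unfold met, sum4.
  rewrite (Hv 0%nat), (Hv 1%nat), (Hv 2%nat), (Hv 3%nat), (Hw 0%nat), (Hw 1%nat), (Hw 2%nat), (Hw 3%nat) by lia.
  reflexivity.
Qed.

Definition dPhi (r : R) (v : vec) : vec :=
  mkvec (- r * v 2%nat) (- r * v 3%nat) (- / r * v 0%nat) (- / r * v 1%nat).

Lemma Phi_pt r : 1 < r -> act 0 (- r) 1 0 (swap (pr r)) = pr r.
Proof.
  intros Hr. unfold act, mob, swap, of_zz, z1, z2, pr, coord, Cmul, Cinv, Cadd, Cscal; simpl.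
  repeat f_equal; field; lra.
Qed.

Lemma Phi_vec r v i : 1 < r -> (i < 4)%nat ->
  dact 0 (- r) 1 0 (swap (pr r)) (dswap v) i = dPhi r v i.
Proof.
  intros Hr Hi. unfold dact, dPhi, mob_der, swap, dswap, of_zz, vec_of_zz, z1, z2, pr, coord, Cmul, Cinv, Cadd, Cscal.
  destruct i as [|[|[|[|i]]]]; simpl; try lia; field; lra.
Qed.

Lemma Phi_inv gm r v w : G_invariant gm -> 1 < r ->
  met gm (pr r) (dPhi r v) (dPhi r w) = met gm (pr r) v w.
Proof.
  intros [Hact Hsw] Hr.
  assert (HM : M2 (swap (pr r))) by (unfold M2, swap, pr, of_zz, z1, z2, coord; simpl; repeat split; lra).
  rewrite <- (Hsw (pr r) v w (M2_pr r Hr)).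
  rewrite <- (Hact 0 (-r) 1 0 (swap (pr r)) (dswap v) (dswap w)); [| lra | exact HM].
  rewrite Phi_pt by lra. apply met_ext; intros; symmetry; apply Phi_vec; auto.
Qed.

Ltac metsimp H := unfold met, sum4, Jv, dPhi, mkvec, basis in H; simpl in H; ring_simplify in H.

Lemma relations gm r : is_kahler_metric gm -> G_invariant gm -> 1 < r ->
  let g i j := gm (pr r) i j in
  g 0%nat 0%nat = g 2%nat 2%nat / r ^ 2 /\ g 1%nat 1%nat = g 2%nat 2%nat / r ^ 2 /\
  g 3%nat 3%nat = g 2%nat 2%nat /\ g 2%nat 0%nat = g 0%nat 2%nat /\
  g 1%nat 3%nat = g 0%nat 2%nat /\ g 3%nat 1%nat = g 0%nat 2%nat /\
  g 0%nat 1%nat = 0 /\ g 1%nat 0%nat = 0 /\ g 2%nat 3%nat = 0 /\ g 3%nat 2%nat = 0 /\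
  g 0%nat 3%nat = 0 /\ g 3%nat 0%nat = 0 /\ g 1%nat 2%nat = 0 /\ g 2%nat 1%nat = 0.
Proof.
  intros [_ [Hsym [_ [Hh _]]]] Hinv Hr g.
  pose proof (M2_pr r Hr) as HM.
  pose proof (Hh _ (basis 0) (basis 0) HM) as E1. metsimp E1.
  pose proof (Hh _ (basis 0) (basis 2) HM) as E2. metsimp E2.
  pose proof (Hh _ (basis 0) (basis 3) HM) as E3. metsimp E3.
  pose proof (Hh _ (basis 0) (basis 1) HM) as E4. metsimp E4.
  pose proof (Hh _ (basis 2) (basis 2) HM) as E5. metsimp E5.
  pose proof (Hh _ (basis 2) (basis 3) HM) as E6. metsimp E6.
  pose proof (Phi_inv gm r (basis 0) (basis 0) Hinv Hr) as F1. metsimp F1.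
  pose proof (Phi_inv gm r (basis 0) (basis 3) Hinv Hr) as F2. metsimp F2.
  assert (Hr1 : r * / r = 1) by (field; lra). rewrite Hr1, Rmult_1_l in F2.
  replace ((/ r) ^ 2 * gm (pr r) 2%nat 2%nat) with (gm (pr r) 2%nat 2%nat / r ^ 2) in F1 by (field; lra).
  pose proof (Hsym _ 0%nat 1%nat HM ltac:(lia) ltac:(lia)).
  pose proof (Hsym _ 0%nat 2%nat HM ltac:(lia) ltac:(lia)).
  pose proof (Hsym _ 0%nat 3%nat HM ltac:(lia) ltac:(lia)).
  pose proof (Hsym _ 1%nat 2%nat HM ltac:(lia) ltac:(lia)).
  pose proof (Hsym _ 1%nat 3%nat HM ltac:(lia) ltac:(lia)).
  pose proof (Hsym _ 2%nat 3%nat HM ltac:(lia) ltac:(lia)).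
  unfold g. repeat split; lra.
Qed.

Lemma NF gm r v w : is_kahler_metric gm -> G_invariant gm -> 1 < r ->
  met gm (pr r) v w =
  gm (pr r) 2%nat 2%nat / r ^ 2 * (v 0%nat * w 0%nat + v 1%nat * w 1%nat)
  + gm (pr r) 2%nat 2%nat * (v 2%nat * w 2%nat + v 3%nat * w 3%nat)
  + gm (pr r) 0%nat 2%nat * (v 0%nat * w 2%nat + v 2%nat * w 0%nat + v 1%nat * w 3%nat + v 3%nat * w 1%nat).
Proof.
  intros Hk Hi Hr.
  destruct (relations gm r Hk Hi Hr) as (R1&R2&R3&R4&R5&R6&R7&R8&R9&R10&R11&R12&R13&R14).
  cbv zeta in *.
  unfold met, sum4. rewrite R1, R2, R3, R4, R5, R6, R7, R8, R9, R10, R11, R12, R13, R14. ring.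
Qed.

Lemma exp_half s : exp s = exp (s / 2) * exp (s / 2).
Proof. rewrite <- exp_plus. f_equal. field. Qed.

Lemma exp_mhalf s : exp (- s / 2) = / exp (s / 2).
Proof. rewrite <- exp_Ropp. f_equal. field. Qed.

Lemma ws_pt s : act (/ exp (s / 2)) 0 0 1 (pr (exp s)) = ws s.
Proof.
  pose proof (exp_pos (s / 2)) as Hu.
  unfold act, mob, of_zz, z1, z2, pr, ws, coord, Cmul, Cinv, Cadd, Cscal; simpl.
  rewrite exp_mhalf, (exp_half s). repeat f_equal; field; lra.
Qed.

Lemma met_ws gm s v w : G_invariant gm -> 0 < s ->
  met gm (ws s) v w = exp s * met gm (pr (exp s)) v w.
Proof.
  intros [Hact _] Hs. pose proof (exp_pos (s / 2)) as Hu.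
  set (u := exp (s / 2)) in *.
  rewrite <- ws_pt.
  rewrite (met_ext gm _ v w (dact (/ u) 0 0 1 (pr (exp s)) (fun i => u * v i))
    (dact (/ u) 0 0 1 (pr (exp s)) (fun i => u * w i))).
  - rewrite Hact.
    + unfold met, sum4. rewrite (exp_half s). fold u. ring.
    + replace (/ u * 1 - 0 * 0) with (/ u) by ring. apply Rinv_0_lt_compat; auto.
    + apply M2_pr, exp_gt1; auto.
  - intros i Hi. unfold dact, mob_der, vec_of_zz, z1, z2, pr, coord, Cmul, Cinv, Cadd, Cscal, mkvec.
    destruct i as [|[|[|[|i]]]]; simpl; try lia; field; lra.
  - intros i Hi. unfold dact, mob_der, vec_of_zz, z1, z2, pr, coord, Cmul, Cinv, Cadd, Cscal, mkvec.
    destruct i as [|[|[|[|i]]]]; simpl; try lia; field; lra.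
Qed.

Lemma met_sbasis gm p c i j : (i < 4)%nat -> (j < 4)%nat ->
  met gm p (fun k => c * basis i k) (fun k => c * basis j k) = c ^ 2 * gm p i j.
Proof.
  intros Hi Hj. unfold met, sum4, basis.
  destruct i as [|[|[|[|i]]]]; try lia; destruct j as [|[|[|[|j]]]]; try lia; simpl; ring.
Qed.

Lemma kf13 gm q : kform gm q 1 3 = - gm q 0%nat 3%nat.
Proof. unfold kform, met, sum4, Jv, mkvec, basis; simpl; ring. Qed.
Lemma kf30 gm q : kform gm q 3 0 = - gm q 2%nat 0%nat.
Proof. unfold kform, met, sum4, Jv, mkvec, basis; simpl; ring. Qed.
Lemma kf32 gm q : kform gm q 3 2 = - gm q 2%nat 2%nat.
Proof. unfold kform, met, sum4, Jv, mkvec, basis; simpl; ring. Qed.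
Lemma kf01 gm q : kform gm q 0 1 = gm q 1%nat 1%nat.
Proof. unfold kform, met, sum4, Jv, mkvec, basis; simpl; ring. Qed.
Lemma kf21 gm q : kform gm q 2 1 = gm q 3%nat 1%nat.
Proof. unfold kform, met, sum4, Jv, mkvec, basis; simpl; ring. Qed.

Lemma M2_pr' x : 0 < x -> x <> 1 -> M2 (pr x).
Proof. intros. unfold M2, pr; simpl. repeat split; try lra; auto. Qed.

Lemma transl gm r t i j : G_invariant gm -> 1 < r -> (i < 4)%nat -> (j < 4)%nat ->
  gm (0, r, t, 1) i j = gm (- t, r, 0, 1) i j.
Proof.
  intros [Hact _] Hr Hi Hj.
  assert (HM : M2 (- t, r, 0, 1)) by (unfold M2; simpl; repeat split; lra).
  pose proof (Hact 1 t 0 1 (- t, r, 0, 1) (fun k => 1 * basis i k) (fun k => 1 * basis j k)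
     ltac:(lra) HM) as E.
  rewrite met_sbasis in E by auto.
  replace (act 1 t 0 1 (- t, r, 0, 1)) with ((0, r, t, 1) : pt) in E.
  2:{ unfold act, mob, of_zz, z1, z2, coord, Cmul, Cinv, Cadd, Cscal; simpl. repeat f_equal; field; lra. }
  rewrite (met_ext gm _ _ _ (fun k => 1 * basis i k) (fun k => 1 * basis j k)) in E.
  - rewrite met_sbasis in E by auto. lra.
  - intros k Hk. unfold dact, mob_der, vec_of_zz, z1, z2, coord, Cmul, Cinv, Cadd, Cscal, mkvec.
    destruct k as [|[|[|[|k]]]]; simpl; try lia; field; lra.
  - intros k Hk. unfold dact, mob_der, vec_of_zz, z1, z2, coord, Cmul, Cinv, Cadd, Cscal, mkvec.
    destruct k as [|[|[|[|k]]]]; simpl; try lia; field; lra.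
Qed.

Lemma dil gm r t i j : G_invariant gm -> 0 < r -> 0 < t -> r / t <> 1 -> (i < 4)%nat -> (j < 4)%nat ->
  gm (0, r, 0, t) i j = gm (pr (r / t)) i j / t ^ 2.
Proof.
  intros [Hact _] Hr Ht Hrt Hi Hj.
  assert (HM : M2 (pr (r / t))) by (apply M2_pr'; auto; apply Rdiv_lt_0_compat; auto).
  pose proof (Hact t 0 0 1 (pr (r / t)) (fun k => 1 * basis i k) (fun k => 1 * basis j k)
     ltac:(lra) HM) as E.
  rewrite met_sbasis in E by auto.
  replace (act t 0 0 1 (pr (r / t))) with ((0, r, 0, t) : pt) in E.
  2:{ unfold act, mob, of_zz, z1, z2, pr, coord, Cmul, Cinv, Cadd, Cscal; simpl. repeat f_equal; field; lra. }
  rewrite (met_ext gm _ _ _ (fun k => t * basis i k) (fun k => t * basis j k)) in E.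
  - rewrite met_sbasis in E by auto. assert (t ^ 2 <> 0) by (apply pow_nonzero; lra).
    apply (Rmult_eq_reg_l (t ^ 2)); auto. rewrite E. field. lra.
  - intros k Hk. unfold dact, mob_der, vec_of_zz, z1, z2, pr, coord, Cmul, Cinv, Cadd, Cscal, mkvec.
    destruct k as [|[|[|[|k]]]]; simpl; try lia; field; lra.
  - intros k Hk. unfold dact, mob_der, vec_of_zz, z1, z2, pr, coord, Cmul, Cinv, Cadd, Cscal, mkvec.
    destruct k as [|[|[|[|k]]]]; simpl; try lia; field; lra.
Qed.

Lemma dopp f x l : derivable_pt_lim f x l -> derivable_pt_lim (fun t => - f t) x (- l).
Proof. intros H. eapply dext; [| reflexivity | apply derivable_pt_lim_opp, H]. intro; reflexivity. Qed.

Lemma dneg f l : derivable_pt_lim f 0 l -> derivable_pt_lim (fun t => f (- t)) 0 (- l).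
Proof.
  intros H. eapply dext; [| | apply (derivable_pt_lim_comp (fun t => - t) f 0 (-1) l)].
  - intro; reflexivity.
  - ring.
  - eapply dext; [| | apply derivable_pt_lim_opp, derivable_pt_lim_id]; intros; [reflexivity| ring].
  - rewrite Ropp_0. exact H.
Qed.

Lemma dil_deriv f r l : 0 < r -> derivable_pt_lim f r l ->
  derivable_pt_lim (fun t => f (r / t) / t ^ 2) 1 (- r * l - 2 * f r).
Proof.
  intros Hr H.
  assert (H1 : derivable_pt_lim (fun t => r / t) 1 (- r)).
  { eapply dext; [| | apply (derivable_pt_lim_div (fun _ => r) id 1 0 1)].
    - intro; reflexivity.
    - cbv beta; unfold id, Rsqr; field.
    - apply derivable_pt_lim_const.
    - apply derivable_pt_lim_id.
    - unfold id; lra. }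
  assert (H2 : derivable_pt_lim (fun t => f (r / t)) 1 (l * - r)).
  { eapply dext; [| reflexivity | apply (derivable_pt_lim_comp (fun t => r / t) f 1 (- r) l)].
    intro; reflexivity. exact H1. replace (r / 1) with r by field. exact H. }
  eapply dext; [| | apply (derivable_pt_lim_div _ (fun t => t ^ 2) 1 _ _ H2 (derivable_pt_lim_pow 1 2))].
  - intro; reflexivity.
  - replace (r / 1) with r by field. simpl. unfold Rsqr. field.
  - simpl; lra.
Qed.

Lemma dquot f r l : 0 < r -> derivable_pt_lim f r l ->
  derivable_pt_lim (fun t => f t / t ^ 2) r ((l * r ^ 2 - 2 * r * f r) / (r ^ 2) ^ 2).
Proof.
  intros Hr H.
  eapply dext; [| | apply (derivable_pt_lim_div _ (fun t => t ^ 2) r _ _ H (derivable_pt_lim_pow r 2))].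
  - intro; reflexivity.
  - simpl. unfold Rsqr. field. lra.
  - apply pow_nonzero; lra.
Qed.

Lemma partial_ex gm i j k : is_kahler_metric gm -> (i < 4)%nat -> (j < 4)%nat -> (k < 4)%nat ->
  exists df, has_partial M2 (fun p => gm p i j) k df.
Proof.
  intros [Hsm _] Hi Hj Hk. destruct (Hsm i j Hi Hj 1%nat) as [_ Hp].
  destruct (Hp k Hk) as [df [H _]]. eauto.
Qed.

Lemma near_r r : 1 < r -> exists d, 0 < d /\ forall t, Rabs (t - r) < d -> 1 < t.
Proof.
  intros Hr. exists (r - 1). split. lra. intros t Ht.
  apply Rabs_def2 in Ht. lra.
Qed.

Lemma near_1 r : 1 < r -> exists d, 0 < d /\ forall t, Rabs (t - 1) < d -> 0 < t /\ r / t <> 1.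
Proof.
  intros Hr. exists (Rmin (1/2) ((r - 1) / 2)). split. apply Rmin_pos; lra.
  intros t Ht. apply Rabs_def2 in Ht.
  pose proof (Rmin_l (1/2) ((r - 1) / 2)). pose proof (Rmin_r (1/2) ((r - 1) / 2)).
  split. lra. intro E. assert (r = t) by (apply (Rmult_eq_reg_r (/ t)); [rewrite Rinv_r by lra; exact E | apply Rinv_neq_0_compat; lra]). lra.
Qed.

Lemma closed_rel gm r d02 d22 : is_kahler_metric gm -> G_invariant gm -> 1 < r ->
  derivable_pt_lim (fun t => gm (pr t) 0%nat 2%nat) r d02 ->
  derivable_pt_lim (fun t => gm (pr t) 2%nat 2%nat) r d22 ->
  (1 + r) * d02 + (1 + / r) * d22 + 2 * gm (pr r) 0%nat 2%nat = 0.
Proof.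
  intros Hk Hi Hr H02 H22.
  pose proof Hk as Hk'. destruct Hk' as [_ [Hsym [_ [_ Hc]]]].
  pose proof (M2_pr r Hr) as HM.
  destruct (partial_ex gm 0 3 0 Hk ltac:(lia) ltac:(lia) ltac:(lia)) as [df03 P03].
  destruct (partial_ex gm 2 0 1 Hk ltac:(lia) ltac:(lia) ltac:(lia)) as [df20 P20].
  destruct (partial_ex gm 1 1 1 Hk ltac:(lia) ltac:(lia) ltac:(lia)) as [df11 P11].
  destruct (partial_ex gm 3 1 1 Hk ltac:(lia) ltac:(lia) ltac:(lia)) as [df31 P31].
  pose proof (P03 _ HM) as A03. pose proof (P20 _ HM) as A20.
  pose proof (P11 _ HM) as A11. pose proof (P31 _ HM) as A31. simpl in A03, A20, A11, A31.
  set (e03 := df03 (pr r)) in *. set (e20 := df20 (pr r)) in *.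
  set (e11 := df11 (pr r)) in *. set (e31 := df31 (pr r)) in *.
  assert (T1 : - e03 + - e20 + (- r * e11 - 2 * gm (pr r) 1%nat 1%nat) = 0).
  { apply (Hc (pr r) 0%nat 1%nat 3%nat); auto; try lia.
    - eapply dext; [| reflexivity | apply dopp, A03]. intro t. rewrite kf13. reflexivity.
    - eapply dext; [| reflexivity | apply dopp, A20]. intro t. rewrite kf30. reflexivity.
    - simpl. destruct (near_1 r Hr) as [d [Hd Hn]].
      eapply dloc; [| apply (dil_deriv (fun x => gm (pr x) 1%nat 1%nat)); [lra | exact A11]].
      exists d; split; auto. intros t Ht. destruct (Hn t Ht) as [Ht0 Hrt].
      rewrite kf01. rewrite (dil gm r t 1 1); auto; lra. }
  assert (T2 : e03 + - d22 + (- r * e31 - 2 * gm (pr r) 3%nat 1%nat) = 0).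
  { apply (Hc (pr r) 2%nat 1%nat 3%nat); auto; try lia.
    - eapply dext; [| | apply dopp, dneg, A03].
      + intro t. rewrite kf13. simpl. rewrite (transl gm r t 0 3); auto; lia.
      + ring.
    - eapply dext; [| reflexivity | apply dopp, H22]. intro t. rewrite kf32. reflexivity.
    - simpl. destruct (near_1 r Hr) as [d [Hd Hn]].
      eapply dloc; [| apply (dil_deriv (fun x => gm (pr x) 3%nat 1%nat)); [lra | exact A31]].
      exists d; split; auto. intros t Ht. destruct (Hn t Ht) as [Ht0 Hrt].
      rewrite kf21. rewrite (dil gm r t 3 1); auto; lra. }
  destruct (near_r r Hr) as [d [Hd Hn]].
  assert (E20 : e20 = d02).
  { apply (uniqueness_limite (fun t => gm (pr t) 2%nat 0%nat) r); auto.
    eapply dloc; [| exact H02]. exists d; split; auto. intros t Ht.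
    apply Hsym; try lia. apply M2_pr; auto. }
  assert (E31 : e31 = d02).
  { apply (uniqueness_limite (fun t => gm (pr t) 3%nat 1%nat) r); auto.
    eapply dloc; [| exact H02]. exists d; split; auto. intros t Ht.
    destruct (relations gm t Hk Hi (Hn t Ht)) as (R1&R2&R3&R4&R5&R6&_). cbv zeta in R6. auto. }
  assert (E11 : e11 = (d22 * r ^ 2 - 2 * r * gm (pr r) 2%nat 2%nat) / (r ^ 2) ^ 2).
  { apply (uniqueness_limite (fun t => gm (pr t) 1%nat 1%nat) r); auto.
    eapply (dloc (fun t => gm (pr t) 2%nat 2%nat / t ^ 2)); [| apply dquot; [lra | exact H22]]. exists d; split; auto. intros t Ht.
    destruct (relations gm t Hk Hi (Hn t Ht)) as (R1&R2&_). cbv zeta in R2. auto. }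
  destruct (relations gm r Hk Hi Hr) as (R1&R2&R3&R4&R5&R6&_). cbv zeta in *.
  rewrite R2 in T1. rewrite R6 in T2. rewrite E20 in T1. rewrite E31 in T2. rewrite E11 in T1.
  assert (Hr0 : r <> 0) by lra.
  apply (Rmult_eq_reg_l r); [| exact Hr0]. rewrite Rmult_0_r.
  replace (r * ((1 + r) * d02 + (1 + / r) * d22 + 2 * gm (pr r) 0%nat 2%nat))
    with (- r * (- e03 + - d02 + (- r * ((d22 * r ^ 2 - 2 * r * gm (pr r) 2%nat 2%nat) / (r ^ 2) ^ 2) - 2 * (gm (pr r) 2%nat 2%nat / r ^ 2)))
          - r * (e03 + - d22 + (- r * d02 - 2 * gm (pr r) 0%nat 2%nat))) by (field; auto).
  rewrite T1, T2. ring.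
Qed.

Definition Afun (gm : metric_field) (s : R) : R :=
  8 * cosh (s / 2) ^ 2 * (gm (pr (exp s)) 2%nat 2%nat + exp s * gm (pr (exp s)) 0%nat 2%nat).

Lemma cosh_u s : cosh (s / 2) = (exp (s / 2) + / exp (s / 2)) / 2.
Proof. unfold cosh. rewrite <- exp_Ropp. reflexivity. Qed.
Lemma sinh_u s : sinh (s / 2) = (exp (s / 2) - / exp (s / 2)) / 2.
Proof. unfold sinh. rewrite <- exp_Ropp. reflexivity. Qed.

Lemma A_smooth gm : is_kahler_metric gm -> smooth_pos (Afun gm).
Proof.
  intros [Hsm _] k.
  assert (G : forall i j, (i < 4)%nat -> (j < 4)%nat -> Ck_pos k (fun t => gm (pr (exp t)) i j)).
  { intros i j Hi Hj. apply (Ck_comp k (fun p => gm p i j)). apply Hsm; auto. }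
  set (c := fun t => (exp (/ 2 * t) + exp (- / 2 * t)) * / 2).
  assert (Hc : Ck_pos k c).
  { unfold c. apply Ck_mult; [apply Ck_plus; apply Ck_expl | apply Ck_const]. }
  eapply Ck_ext; [| apply (Ck_mult k (fun t => 8 * (c t * c t)) (fun t => gm (pr (exp t)) 2%nat 2%nat + exp t * gm (pr (exp t)) 0%nat 2%nat))].
  - intro t. cbv beta. unfold Afun, c. rewrite cosh_u, <- exp_Ropp.
    replace (/ 2 * t) with (t / 2) by field. replace (- / 2 * t) with (- (t / 2)) by field. unfold Rdiv; ring_simplify; reflexivity.
  - apply Ck_mult; [apply Ck_const | apply Ck_mult; auto].
  - apply Ck_plus; [apply G; lia | apply Ck_mult; [apply Ck_exp | apply G; lia]].
Qed.

Lemma Dvalue gm s D : is_kahler_metric gm -> G_invariant gm -> 0 < s ->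
  derivable_pt_lim (fun t => Afun gm t / cosh (t / 2)) s D ->
  D = 4 * sinh (s / 2) * (gm (pr (exp s)) 2%nat 2%nat - exp s * gm (pr (exp s)) 0%nat 2%nat).
Proof.
  intros Hk Hi Hs HD.
  pose proof (exp_gt1 s Hs) as Hr.
  destruct (partial_ex gm 0 2 1 Hk ltac:(lia) ltac:(lia) ltac:(lia)) as [df02 P02].
  destruct (partial_ex gm 2 2 1 Hk ltac:(lia) ltac:(lia) ltac:(lia)) as [df22 P22].
  pose proof (dcompf _ _ s P02 Hs) as D02. pose proof (dcompf _ _ s P22 Hs) as D22.
  pose proof (closed_rel gm (exp s) _ _ Hk Hi Hr (partial1 _ _ _ P02 Hr) (partial1 _ _ _ P22 Hr)) as CR.
  set (d02 := df02 (pr (exp s))) in *. set (d22 := df22 (pr (exp s))) in *.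
  set (B := gm (pr (exp s)) 2%nat 2%nat) in *. set (C := gm (pr (exp s)) 0%nat 2%nat) in *.
  assert (Hch : derivable_pt_lim (fun t => cosh (t / 2)) s (sinh (s / 2) / 2)).
  { eapply dext; [| | apply (derivable_pt_lim_comp (fun t => t / 2) cosh s (/ 2) (sinh (s / 2)))].
    - intro; reflexivity.
    - field.
    - eapply dext; [| | apply (derivable_pt_lim_scal id (/ 2) s 1), derivable_pt_lim_id].
      intro; unfold mult_real_fct, id; field. ring.
    - apply derivable_pt_lim_cosh. }
  assert (Hc8 : derivable_pt_lim (fun t => 8 * cosh (t / 2)) s (8 * (sinh (s / 2) / 2))).
  { eapply dext; [| | apply (derivable_pt_lim_scal (fun t => cosh (t / 2)) 8 s _ Hch)]; intros; unfold mult_real_fct; [reflexivity | ring]. }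
  assert (Hg : derivable_pt_lim (fun t => gm (pr (exp t)) 2%nat 2%nat + exp t * gm (pr (exp t)) 0%nat 2%nat) s
     (d22 * exp s + (exp s * C + exp s * (d02 * exp s)))).
  { eapply dext; [| reflexivity | apply (derivable_pt_lim_plus _ (fun t => exp t * gm (pr (exp t)) 0%nat 2%nat) s _ _ D22)].
    - intro; reflexivity.
    - eapply dext; [| reflexivity | apply (derivable_pt_lim_mult exp (fun t => gm (pr (exp t)) 0%nat 2%nat) s _ _ (derivable_pt_lim_exp s) D02)].
      intro; reflexivity. }
  assert (HD2 : derivable_pt_lim (fun t => Afun gm t / cosh (t / 2)) s
     (8 * (sinh (s / 2) / 2) * (B + exp s * C) + 8 * cosh (s / 2) * (d22 * exp s + (exp s * C + exp s * (d02 * exp s))))).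
  { eapply dext; [| reflexivity | apply (derivable_pt_lim_mult _ (fun t => gm (pr (exp t)) 2%nat 2%nat + exp t * gm (pr (exp t)) 0%nat 2%nat) s _ _ Hc8 Hg)].
    intro t. unfold Afun, mult_fct. assert (0 < cosh (t / 2)) by (unfold cosh; pose proof (exp_pos (t/2)); pose proof (exp_pos (-(t/2))); lra).
    field. lra. }
  pose proof (uniqueness_limite _ _ _ _ HD HD2) as E. rewrite E.
  pose proof (exp_pos (s / 2)) as Hu.
  rewrite cosh_u, sinh_u. rewrite (exp_half s) in *. set (u := exp (s / 2)) in *.
  assert (Hd02 : d02 = - ((1 + / (u * u)) * d22 + 2 * C) / (1 + u * u)).
  { apply (Rmult_eq_reg_l (1 + u * u)); [| nra].
    replace ((1 + u * u) * (- ((1 + / (u * u)) * d22 + 2 * C) / (1 + u * u))) with (- ((1 + / (u * u)) * d22 + 2 * C)) by (field; nra). lra. }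
  rewrite Hd02. field. split; nra.
Qed.

Definition Fexp (u : R) (k : nat) : vec :=
  match k with
  | 0%nat => mkvec 0 (u / 2) 0 (- / u / 2)
  | 1%nat => mkvec (1 + u * u) 0 (1 + / u * / u) 0
  | 2%nat => mkvec (1 - u * u) 0 (1 - / u * / u) 0
  | _ => mkvec 0 (2 * u) 0 (2 * / u)
  end.

Definition Fws (s : R) (k : nat) : vec :=
  match k with 0%nat => dws s | _ => Xe k (ws s) end.

Lemma Fval s k m : (k < 4)%nat -> (m < 4)%nat -> Fws s k m = Fexp (exp (s / 2)) k m.
Proof.
  intros Hk Hm. pose proof (exp_pos (s / 2)) as Hu.
  unfold Fws, Fexp, dws, Xe, inf_vec, inf_act, vec_of_zz, ws, z1, z2, coord, Cadd, Cscal, Cmul, mkvec.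
  rewrite exp_mhalf.
  destruct k as [|[|[|[|k]]]]; try lia; destruct m as [|[|[|[|m]]]]; try lia; simpl; field; lra.
Qed.

Lemma frame_F a b c d s i : frame a b c d s i = dact a b c d (ws s) (Fws s i).
Proof. destruct i as [|[|[|[|i]]]]; reflexivity. Qed.

Theorem proposition3p1 (gm : metric_field) :
  is_kahler_metric gm -> G_invariant gm ->
  exists A : R -> R, smooth_pos A /\
    forall s (D : R), 0 < s ->
      derivable_pt_lim (fun t => A t / cosh (t / 2)) s D ->
      forall a b c d, 0 < a * d - b * c ->
      let q := act a b c d (ws s) in
      let coef (i : nat) : R :=
        match i with
        | 0%nat => / (8 * sinh (s / 2)) * D
        | 1%nat => A s
        | 2%nat => 2 * sinh (s / 2) * D
        | _ => A s / (cosh (s / 2) ^ 2)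
        end in
      forall i j, (i < 4)%nat -> (j < 4)%nat ->
        met gm q (frame a b c d s i) (frame a b c d s j)
        = if Nat.eqb i j then coef i else 0.
Proof.
  intros Hk Hi. exists (Afun gm). split. apply A_smooth; auto.
  intros s D Hs HD a b c d Hdet q coef i j Hi4 Hj4.
  pose proof (Dvalue gm s D Hk Hi Hs HD) as ED.
  unfold q. rewrite !frame_F. pose proof Hi as [Hact _].
  assert (HMw : M2 (ws s)).
  { pose proof (exp_pos (s / 2)). pose proof (exp_pos (- s / 2)).
    unfold M2, ws; simpl. repeat split; try lra. right. rewrite exp_mhalf.
    pose proof (exp_gt1 (s / 2) ltac:(lra)). intro E.
    assert (exp (s / 2) * exp (s / 2) = 1) by (rewrite E at 1; field; lra). nra. }
  rewrite Hact by auto.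
  rewrite (met_ext gm _ _ _ (Fexp (exp (s / 2)) i) (Fexp (exp (s / 2)) j)) by (intros; apply Fval; auto).
  rewrite met_ws by auto. rewrite NF by (auto; apply exp_gt1; auto).
  unfold coef. rewrite ED. unfold Afun.
  pose proof (exp_gt1 (s / 2) ltac:(lra)) as Hu1.
  rewrite cosh_u, sinh_u. rewrite (exp_half s).
  set (B := gm (pr (exp (s / 2) * exp (s / 2))) 2%nat 2%nat).
  set (C := gm (pr (exp (s / 2) * exp (s / 2))) 0%nat 2%nat).
  set (u := exp (s / 2)) in *.
  assert (u - / u <> 0) by (intro E; assert (u * u = 1) by (apply (Rmult_eq_reg_r (/ u)); [field_simplify; lra | apply Rinv_neq_0_compat; lra]); nra).
  assert (0 < / u) by (apply Rinv_0_lt_compat; lra).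
  destruct i as [|[|[|[|i]]]]; try lia; destruct j as [|[|[|[|j]]]]; try lia;
    unfold Fexp, mkvec; simpl; field; repeat split; try lra; nra.
Qed.
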